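(* Let $L, H \in \mathcal{L}$, $\gamma \in Z^1(L,T)$, $\sigma \in Z^1(H,T)$ and $g \in S$. Then $C_L(\gamma)^g \leq C_H(\sigma)$ if and only if $L^g \leq H$ and $\sigma^g_L - \gamma = \zeta_{L,H,g}$ (as maps $L \to T$).
   Context: Conventions: for a group $G$ acting on the right on an additive abelian group $M$, $Z^n(G,M)$, $B^n(G,M)$ are normalised cocycles and coboundaries; for $\tau \in Z^2(G,M)$, $\mathrm{Ext}(\tau)$ is $G\times M$ with $(g,m)(h,n) = (gh, m^h+n+\tau(g,h))$. Setting: $S$ is an infinite pro-$p$-group of finite coclass, $T = \gamma_\ell(S)$ ($\ell$ large) with $T \cong \mathbb{Z}_p^d$, $P = S/T$ a finite $p$-group, the series $T_0=T$, $T_{i+1} = [T_i,S]$ having all indices $p$. $T$ is an additive $P$-module via conjugation, $S = \mathrm{Ext}(\rho)$ for some $\rho \in Z^2(P,T)$, $\epsilon: S\to P$ the projection, $T$ identified with $\{(1,t)\}$; elements of $S$ act on $P$ and $T$ through their image in $P$, and $L^g$ denotes conjugation by $\epsilon(g)$. For $L \leq P$, $\overline{L} = \epsilon^{-1}(L)$. $\mathcal{L}$ is the set of elementary abelian $L \leq P$ with $\rho_L \in B^2(L,T)$. For $L \in \mathcal{L}$ a complement $C_L = \{c_L(l)\}$ to $T$ in $\overline{L}$ is fixed, $c_L(l) = (l,t_L(l))$, and for $\delta \in Z^1(L,T)$, $C_L(\delta) = \{(l,t_L(l)+\delta(l)) \mid l\in L\}$. For $L,H\in\mathcal{L}$ and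 $g \in S$ with $L^g \leq H$ define $\zeta_{L,H,g}: L \to S$, $l \mapsto (c_H(l^g)^{-1})^{g^{-1}} \cdot c_L(l)$, and for $\sigma \in Z^1(H,T)$ define $\sigma^g_L : L \to T$, $l \mapsto \sigma(l^g)^{g^{-1}}$ (an element of $Z^1(L,T)$). Equalities of maps into $T$ with maps into $S$ use the identification $t \leftrightarrow (1,t)$. *)

(* Defs.v *)
From HB Require Import structures.
From mathcomp Require Import all_boot all_order all_algebra all_fingroup all_solvable.
From mathcomp Require Import abelian.
Set Implicit Arguments. Unset Strict Implicit. Unset Printing Implicit Defensive.
Import GRing.Theory.
Local Open Scope ring_scope.

Section Defs.
Variables (P : finGroupType) (T : zmodType).

(* [act m g] = m^g : right action of P on the additive abelian group T. *)
Definition is_raction (act : T -> P -> T) : Prop :=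
  [/\ forall m n g, act (m + n) g = act m g + act n g,
      forall m, act m 1%g = m
    & forall m g h, act (act m g) h = act m (g * h)%g].

Definition is_Z2 (act : T -> P -> T) (rho : P -> P -> T) : Prop :=
  [/\ forall g, rho 1%g g = 0,
      forall g, rho g 1%g = 0
    & forall g h k, act (rho g h) k + rho (g * h)%g k = rho h k + rho g (h * k)%g].

Definition ext_mul act rho (x y : P * T) : P * T :=
  ((x.1 * y.1)%g, act x.2 y.1 + y.2 + rho x.1 y.1).
Definition ext_inv (act : T -> P -> T) (rho : P -> P -> T) (x : P * T) : P * T :=
  ((x.1)^-1%g, - act x.2 (x.1)^-1%g - rho x.1 (x.1)^-1%g).
Definition ext_conj act rho (x g : P * T) : P * T :=
  ext_mul act rho (ext_mul act rho (ext_inv act rho g) x) g.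

(* normalised 1-cocycles on L, i.e. elements of Z^1(L,T) (values off L irrelevant) *)
Definition is_Z1_on (act : T -> P -> T) (L : {set P}) (d : P -> T) : Prop :=
  d 1%g = 0 /\ {in L &, forall l k, d (l * k)%g = act (d l) k + d k}.

Definition is_B2_on (act : T -> P -> T) (rho : P -> P -> T) (L : {set P}) : Prop :=
  exists f : P -> T, f 1%g = 0 /\
    {in L &, forall l k, rho l k = act (f l) k + f k - f (l * k)%g}.

Definition in_calL (p : nat) act rho (L : {group P}) : Prop :=
  (p.-abelem L)%g /\ is_B2_on act rho L.

(* C_L = {(l, t l) | l in L} is a complement to T in epsilon^-1(L), i.e. it is a
   subgroup of Ext(rho) (closed under multiplication; L is finite). *)
Definition is_complement_fn act rho (L : {set P}) (t : P -> T) : Prop :=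
  {in L &, forall l k, ext_mul act rho (l, t l) (k, t k) = ((l * k)%g, t (l * k)%g)}.

Definition in_CL (L : {set P}) (t d : P -> T) (x : P * T) : Prop :=
  exists2 l, l \in L & x = (l, t l + d l).

Definition zeta act rho (tL tH : P -> T) (g : P * T) (l : P) : P * T :=
  ext_mul act rho
    (ext_conj act rho (ext_inv act rho ((l ^ g.1)%g, tH (l ^ g.1)%g)) (ext_inv act rho g))
    (l, tL l).

Definition sigma_conj (act : T -> P -> T) (sig : P -> T) (g : P * T) (l : P) : T :=
  act (sig (l ^ g.1)%g) (g.1)^-1%g.

End Defs.

(* Main.v *)
Require Import Defs.
From HB Require Import structures.
From mathcomp Require Import all_boot all_order all_algebra all_fingroup all_solvable.
Set Implicit Arguments. Unset Strict Implicit.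
Import GRing.Theory.
Local Open Scope ring_scope.

Section Grp.
Variables (P : finGroupType) (T : zmodType) (act : T -> P -> T) (rho : P -> P -> T).
Hypothesis Hact : is_raction act.
Hypothesis Hrho : is_Z2 act rho.
Local Notation m := (ext_mul act rho).
Local Notation i := (ext_inv act rho).
Local Notation e := ((1%g, 0) : P * T).

Lemma actD x y g : act (x + y) g = act x g + act y g.
Proof. by case: Hact. Qed.
Lemma act0 g : act 0 g = 0.
Proof. by apply: (addrI (act 0 g)); rewrite -actD !addr0. Qed.
Lemma actN x g : act (- x) g = - act x g.
Proof. by apply: (addrI (act x g)); rewrite -actD !subrr act0. Qed.
Lemma act1 x : act x 1%g = x.
Proof. by case: Hact. Qed.
Lemma actM x g h : act (act x g) h = act x (g * h)%g.
Proof. by case: Hact. Qed.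

Lemma mulA x y z : m (m x y) z = m x (m y z).
Proof.
case: x y z => [g a] [h b] [k c]; rewrite /ext_mul /=; congr pair; first by rewrite mulgA.
case: Hrho => _ _ coc.
rewrite !actD actM.
set A := act a _; set B := act b k; set X := act (rho g h) k.
rewrite (addrAC _ c) -[A + B + X + _]addrA coc.
rewrite -!addrA; congr (_ + (_ + _)).
by rewrite addrA addrC.
Qed.

Lemma mul1 x : m e x = x.
Proof. case: x => h b; rewrite /ext_mul /= mul1g act0 add0r. by case: Hrho => -> _ _; rewrite addr0. Qed.
Lemma mulx1 x : m x e = x.
Proof. case: x => h b; rewrite /ext_mul /= mulg1 act1 addr0. by case: Hrho => _ -> _; rewrite addr0. Qed.
Lemma mulV x : m x (i x) = e.
Proof. case: x => h b; rewrite /ext_mul /ext_inv /= mulgV; congr pair.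
by rewrite addrA subrr add0r addNr. Qed.
Lemma mulVx x : m (i x) x = e.
Proof. case: x => h b; rewrite /ext_mul /ext_inv /= mulVg; congr pair.
rewrite actD !actN !actM mulVg act1.
case: Hrho => r1 r2 coc. have := coc h (h^-1)%g h; rewrite mulgV mulVg r1 r2 !addr0 => E.
by rewrite E [- b - _]addrC -!addrA addKr addNr.
Qed.

Local Notation cj x g := (ext_conj act rho x g).

Lemma inv_uniq x y : m x y = e -> y = i x.
Proof. by move=> E; rewrite -[y]mul1 -(mulVx x) mulA E mulx1. Qed.
Lemma invK x : i (i x) = x.
Proof. by symmetry; apply: inv_uniq; apply: mulVx. Qed.
Lemma invM x y : i (m x y) = m (i y) (i x).
Proof. symmetry; apply: inv_uniq.
by rewrite mulA -[m y _]mulA mulV mul1 mulV. Qed.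
Lemma cjE x g : cj x g = m (m (i g) x) g.
Proof. by []. Qed.
Lemma cjM x y g : cj (m x y) g = m (cj x g) (cj y g).
Proof. by rewrite !cjE -!mulA (mulA _ g (i g)) mulV mulx1. Qed.
Lemma cjK x g : cj (cj x g) (i g) = x.
Proof. by rewrite !cjE invK -!mulA mulV mul1 mulA mulV mulx1. Qed.
Lemma cjKV x g : cj (cj x (i g)) g = x.
Proof. by rewrite -{2}(invK g) cjK. Qed.
Lemma cje g : cj e g = e.
Proof. by rewrite cjE mulx1 mulVx. Qed.
Lemma cjV x g : cj (i x) g = i (cj x g).
Proof. apply: inv_uniq; by rewrite -cjM mulV cje. Qed.

Lemma key a b c s g : cj (m a b) g = m c s <-> m (cj (i c) (i g)) a = m (cj s (i g)) (i b).
Proof.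
split => E.
  have E2 : m a b = m (cj c (i g)) (cj s (i g)) by rewrite -cjM -E cjK.
  rewrite -[a]mulx1 -(mulV b) -(mulA a b (i b)) E2 -(mulA _ _ (i b)) -(mulA (cj (i c) (i g))) -cjM mulVx cje mul1 //.
have E2 : m a b = m (cj c (i g)) (cj s (i g)).
  rewrite -[m a b]mul1 -(mulV (cj c (i g))) (mulA (cj c (i g))) -cjV.
  by rewrite -(mulA _ a b) E (mulA _ (i b) b) mulVx mulx1.
by rewrite E2 -cjM cjKV.
Qed.

Lemma mul_er h a b : m (h, a) (1%g, b) = (h, a + b).
Proof. by rewrite /ext_mul /= mulg1 act1; case: Hrho => _ -> _; rewrite addr0. Qed.
Lemma mul_el t h a : m (1%g, t) (h, a) = (h, act t h + a).
Proof. by rewrite /ext_mul /= mul1g; case: Hrho => -> _ _; rewrite addr0. Qed.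
Lemma cj_e t x : cj (1%g, t) x = (1%g, act t x.1).
Proof. by case: x => h a; rewrite cjE mulA mul_el addrC -mul_er -mulA mulVx mul1. Qed.
Lemma inv_e b : i (1%g, b) = (1%g, - b).
Proof. rewrite /ext_inv /= invg1 act1; by case: Hrho => -> _ _; rewrite subr0. Qed.
End Grp.

Theorem theorem3p2 (p : nat) (P : finGroupType) (T : zmodType)
    (act : T -> P -> T) (rho : P -> P -> T) (L H : {group P})
    (tL tH gam sig : P -> T) (g : P * T) :
  prime p -> (p.-group [set: P])%g ->
  is_raction act -> is_Z2 act rho ->
  in_calL p act rho L -> in_calL p act rho H ->
  is_complement_fn act rho L tL -> is_complement_fn act rho H tH ->
  is_Z1_on act L gam -> is_Z1_on act H sig ->
  (forall l, l \in L -> in_CL H tH sig (ext_conj act rho (l, tL l + gam l) g)) <->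
  ((L :^ g.1)%g \subset H /\
   forall l, l \in L ->
     zeta act rho tL tH g l = (1%g, sigma_conj act sig g l - gam l)).
Proof.
move=> _ _ Hact Hrho _ _ _ _ _ _.
have fst_cj : forall l t, (ext_conj act rho (l, t) g).1 = (l ^ g.1)%g.
  move=> l t; rewrite /ext_conj /ext_mul /ext_inv /=. exact: (esym (mulgA _ _ _)).
have eqv : forall l, ext_conj act rho (l, tL l + gam l) g =
      (l ^ g.1, tH (l ^ g.1) + sig (l ^ g.1))%g <->
      zeta act rho tL tH g l = (1%g, sigma_conj act sig g l - gam l).
  move=> l; rewrite -!(mul_er Hact Hrho).
  rewrite /zeta /sigma_conj -(cj_e Hact Hrho (sig _) (ext_inv act rho g)) //.
  rewrite -(inv_e Hact Hrho).
  exact: key.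
split.
  move=> Hc; split.
    apply/subsetP => x; rewrite mem_conjg => Hx.
    have [h Hh E] := Hc _ Hx.
    have := congr1 fst E; rewrite fst_cj conjgKV /= => ->. exact: Hh.
  move=> l Hl; apply/eqv.
  have [h Hh E] := Hc _ Hl.
  have := congr1 fst E; rewrite fst_cj /= => Eh.
  by rewrite E -Eh.
move=> [sub Hz] l Hl; exists (l ^ g.1)%g.
  by apply: (subsetP sub); rewrite memJ_conjg.
by apply/eqv; apply: Hz.
Qed.
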